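(* Let $N,\mu,\beta,\sigma,\gamma,p>0$ and $0<\rho<1$ and consider the system $$S'=\mu N-\tfrac{\beta(1-\rho)}{N}SI-\tfrac{p}{N}S-\mu S,\qquad E'=\tfrac{\beta(1-\rho)}{N}SI-(\sigma+\mu)E,\qquad I'=\sigma E-(\gamma+\mu)I$$ on $\Omega=\{(S,E,I)\in\mathbb{R}_+^3: S+E+I\le N\}$. Then any $\omega$-limit set contained in the interior of $\Omega$ is either a closed orbit or the endemic equilibrium $(S^e,E^e,I^e)$, where $$S^e=\frac{(\sigma+\mu)(\gamma+\mu)N}{\sigma\beta(1-\rho)},\quad I^e=\frac{\mu N\sigma\beta(1-\rho)-(\sigma+\mu)(\gamma+\mu)(p+\mu N)}{(\sigma+\mu)(\gamma+\mu)\beta(1-\rho)},\quad E^e=\frac{\gamma+\mu}{\sigma}I^e.$$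
   Context: The $\omega$-limit set of a solution $x(\cdot)$ is $\{y:\exists t_n\to+\infty,\ x(t_n)\to y\}$. The endemic equilibrium lies in the interior of $\Omega$ exactly when $\mathcal{R}_0=\frac{\mu N\sigma\beta(1-\rho)}{(\sigma+\mu)(\gamma+\mu)(p+\mu N)}>1$. *)

(* Defs.v *)
From Stdlib Require Import Reals.
From Coquelicot Require Import Coquelicot.
Open Scope R_scope.

Definition fS (N mu beta rho p : R) (S E I : R) : R :=
  mu * N - beta * (1 - rho) / N * S * I - p / N * S - mu * S.
Definition fE (N mu beta rho sigma : R) (S E I : R) : R :=
  beta * (1 - rho) / N * S * I - (sigma + mu) * E.
Definition fI (mu sigma gamma : R) (S E I : R) : R :=
  sigma * E - (gamma + mu) * I.

Definition inOmega (N : R) (x : R * R * R) : Prop :=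
  let '(s, e, i) := x in 0 <= s /\ 0 <= e /\ 0 <= i /\ s + e + i <= N.

Definition inIntOmega (N : R) (x : R * R * R) : Prop :=
  let '(s, e, i) := x in 0 < s /\ 0 < e /\ 0 < i /\ s + e + i < N.

Definition solves_at (N mu beta sigma gamma rho p : R) (x : R -> R * R * R) (t : R) : Prop :=
  let S := fun s => fst (fst (x s)) in
  let E := fun s => snd (fst (x s)) in
  let I := fun s => snd (x s) in
  is_derive S t (fS N mu beta rho p (S t) (E t) (I t)) /\
  is_derive E t (fE N mu beta rho sigma (S t) (E t) (I t)) /\
  is_derive I t (fI mu sigma gamma (S t) (E t) (I t)).

Definition omega_limit (x : R -> R * R * R) (y : R * R * R) : Prop :=
  exists tn : nat -> R,
    is_lim_seq tn p_infty /\
    is_lim_seq (fun n => fst (fst (x (tn n)))) (fst (fst y)) /\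
    is_lim_seq (fun n => snd (fst (x (tn n)))) (snd (fst y)) /\
    is_lim_seq (fun n => snd (x (tn n))) (snd y).

Definition closed_orbit (N mu beta sigma gamma rho p : R) (A : R * R * R -> Prop) : Prop :=
  exists (y : R -> R * R * R) (T : R),
    (forall t, solves_at N mu beta sigma gamma rho p y t) /\
    0 < T /\ (forall t, y (t + T) = y t) /\
    (exists t1 t2, y t1 <> y t2) /\
    (forall z, A z <-> exists t, y t = z).

Definition Se (N mu beta sigma gamma rho : R) : R :=
  (sigma + mu) * (gamma + mu) * N / (sigma * beta * (1 - rho)).
Definition Ie (N mu beta sigma gamma rho p : R) : R :=
  (mu * N * sigma * beta * (1 - rho) - (sigma + mu) * (gamma + mu) * (p + mu * N))
  / ((sigma + mu) * (gamma + mu) * beta * (1 - rho)).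
Definition Ee (N mu beta sigma gamma rho p : R) : R :=
  (gamma + mu) / sigma * Ie N mu beta sigma gamma rho p.

(* Main.v *)
Require Import Defs.
From Stdlib Require Import Reals Lra Psatz Lia ClassicalEpsilon Classical.
From Coquelicot Require Import Coquelicot.
Open Scope R_scope.

Lemma deriv_cont (f : R -> R) x l : is_derive f x l -> continuity_pt f x.
Proof.
  intros H. apply continuity_pt_filterlim.
  apply (ex_derive_continuous f x). exists l. exact H.
Qed.

Lemma mvt (f df : R -> R) a b : a <= b ->
  (forall x, a <= x <= b -> is_derive f x (df x)) ->
  exists c, a <= c <= b /\ f b - f a = df c * (b - a).
Proof.
  intros Hab H.
  destruct (MVT_gen f a b df) as [c [Hc Heq]].
  - intros y Hy. apply H. rewrite Rmin_left in Hy by lra. rewrite Rmax_right in Hy by lra. lra.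
  - intros y Hy. apply (deriv_cont f y (df y)). apply H.
    rewrite Rmin_left in Hy by lra. rewrite Rmax_right in Hy by lra. lra.
  - exists c. rewrite Rmin_left in Hc by lra. rewrite Rmax_right in Hc by lra. split; [lra|exact Heq].
Qed.

Lemma min_deriv (f : R -> R) a m l : a < m -> is_derive f m l ->
  (forall s, a <= s <= m -> f m <= f s) -> l <= 0.
Proof.
  intros Ham Hd Hmin.
  apply is_derive_Reals in Hd.
  destruct (Rle_or_lt l 0) as [Hl|Hl]; [exact Hl|exfalso].
  destruct (Hd (l/2)) as [del Hdel]; [lra|].
  set (h := - Rmin (del/2) (m - a)).
  assert (Hh1 : Rmin (del/2) (m-a) > 0).
  { apply Rmin_pos; [destruct del; simpl; lra| lra]. }
  assert (Hh2 : Rmin (del/2) (m-a) <= del/2) by apply Rmin_l.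
  assert (Hh3 : Rmin (del/2) (m-a) <= m - a) by apply Rmin_r.
  assert (Hdp : 0 < pos del) by (destruct del; simpl; lra).
  specialize (Hdel h).
  assert (hne : h <> 0) by (unfold h; lra).
  assert (habs : Rabs h < del) by (unfold h; rewrite Rabs_Ropp, Rabs_pos_eq; lra).
  specialize (Hdel hne habs).
  assert (Hm : f m <= f (m + h)) by (apply Hmin; unfold h; lra).
  apply Rabs_lt_between in Hdel. destruct Hdel as [H1 H2].
  assert (Hq : (f (m + h) - f m) / h <= 0).
  { unfold Rdiv. assert (/ h < 0) by (apply Rinv_lt_0_compat; unfold h; lra). nra. }
  lra.
Qed.

Definition conv (f : R -> R) (l : R) : Prop :=
  forall eps, 0 < eps -> exists T, forall t, T <= t -> Rabs (f t - l) < eps.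

Lemma core (f df q : R -> R) T L l :
  (forall t, T <= t -> is_derive f t (df t)) ->
  (forall t, T <= t -> q t <= df t) ->
  (forall t u, T <= t -> T <= u -> Rabs (q t - q u) <= L * Rabs (t - u)) ->
  conv f l ->
  forall eps, 0 < eps -> exists T', forall t, T' <= t -> q t < eps.
Proof.
  intros Hd Hq HL Hc eps Heps.
  assert (HL0 : 0 <= L).
  { specialize (HL T (T+1)). idtac.
    replace (T - (T+1)) with (-(1)) in HL by ring. rewrite Rabs_Ropp, Rabs_R1 in HL.
    specialize (HL (Rle_refl _) ltac:(lra)). pose proof (Rabs_pos (q T - q (T+1))). lra. }
  set (h := eps / (2 * (L + 1))).
  assert (Hh : 0 < h) by (unfold h; apply Rdiv_lt_0_compat; lra).
  assert (HLh : L * h <= eps / 2).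
  { unfold h. apply (Rmult_le_reg_r (2 * (L+1))); [lra|].
    field_simplify; [|lra]. nra. }
  destruct (Hc (eps * h / 4)) as [T1 HT1]. { apply Rmult_lt_0_compat; [nra|lra]. }
  exists (Rmax T T1). intros t Ht.
  assert (HtT : T <= t) by (eapply Rle_trans; [apply Rmax_l|exact Ht]).
  assert (HtT1 : T1 <= t) by (eapply Rle_trans; [apply Rmax_r|exact Ht]).
  destruct (Rlt_or_le (q t) eps) as [H|H]; [exact H|exfalso].
  destruct (mvt f df t (t + h)) as [c [Hc1 Hc2]]; [lra| intros y Hy; apply Hd; lra |].
  assert (Hqc : q c >= eps / 2).
  { specialize (HL c t ltac:(lra) HtT).
    rewrite (Rabs_pos_eq (c - t)) in HL by lra.
    apply Rabs_le_between in HL. destruct HL. assert (L * (c - t) <= L * h) by (apply Rmult_le_compat_l; lra). lra. }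
  assert (Hdc : df c >= eps / 2) by (specialize (Hq c ltac:(lra)); lra).
  pose proof (HT1 t HtT1) as A1. pose proof (HT1 (t+h) ltac:(lra)) as A2.
  apply Rabs_lt_between in A1. apply Rabs_lt_between in A2.
  replace (t + h - t) with h in Hc2 by ring.
  nra.
Qed.

Lemma lip_of_deriv (f df : R -> R) T B :
  (forall t, T <= t -> is_derive f t (df t)) ->
  (forall t, T <= t -> Rabs (df t) <= B) ->
  forall t u, T <= t -> T <= u -> Rabs (f t - f u) <= B * Rabs (t - u).
Proof.
  intros Hd HB t u Ht Hu.
  destruct (Rle_or_lt u t) as [H|H].
  - destruct (mvt f df u t H) as [c [Hc Heq]]. { intros y Hy; apply Hd; lra. }
    rewrite Heq, Rabs_mult. apply Rmult_le_compat_r; [apply Rabs_pos|]. apply HB; lra.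
  - destruct (mvt f df t u ltac:(lra)) as [c [Hc Heq]]. { intros y Hy; apply Hd; lra. }
    rewrite <- Rabs_Ropp. replace (- (f t - f u)) with (f u - f t) by ring.
    rewrite Heq, Rabs_mult. rewrite <- (Rabs_Ropp (t - u)). replace (- (t-u)) with (u - t) by ring.
    apply Rmult_le_compat_r; [apply Rabs_pos|]. apply HB; lra.
Qed.

Lemma mono_of_deriv (f df : R -> R) T :
  (forall t, T <= t -> is_derive f t (df t)) ->
  (forall t, T <= t -> 0 <= df t) ->
  forall t u, T <= t -> t <= u -> f t <= f u.
Proof.
  intros Hd Hp t u Ht Htu.
  destruct (mvt f df t u Htu) as [c [Hc Heq]]. { intros y Hy; apply Hd; lra. }
  assert (0 <= df c) by (apply Hp; lra). nra.
Qed.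

Lemma mono_conv (f : R -> R) T M :
  (forall t u, T <= t -> t <= u -> f t <= f u) ->
  (forall t, T <= t -> f t <= M) ->
  exists l, conv f l.
Proof.
  intros Hm HM.
  set (E := fun y => exists t, T <= t /\ y = f t).
  destruct (completeness E) as [l [Hub Hlub]].
  - exists M. intros y [t [Ht ->]]. apply HM; exact Ht.
  - exists (f T). exists T. split; [lra|reflexivity].
  - exists l. intros eps Heps.
    destruct (Rlt_or_le (l - eps) l) as [_|]; [|lra].
    assert (exists t, T <= t /\ l - eps < f t) as [t0 [Ht0 Hft0]].
    { apply Classical_Prop.NNPP. intros Hn.
      assert (is_upper_bound E (l - eps)).
      { intros y [t [Ht ->]]. destruct (Rle_or_lt (f t) (l - eps)) as [H|H]; [exact H|].
        exfalso; apply Hn; exists t; split; assumption. }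
      specialize (Hlub _ H). lra. }
    exists t0. intros t Ht.
    assert (f t <= l) by (apply Hub; exists t; split; [lra|reflexivity]).
    assert (f t0 <= f t) by (apply Hm; lra).
    apply Rabs_lt_between. lra.
Qed.

Lemma cont_min f g x: continuity_pt f x -> continuity_pt g x ->
  continuity_pt (fun s => Rmin (f s) (g s)) x.
Proof.
  rewrite !continuity_pt_locally. intros Hf Hg eps.
  generalize (filter_and _ _ (Hf eps) (Hg eps)). apply filter_imp.
  intros u [H1 H2]. apply Rabs_lt_between in H1. apply Rabs_lt_between in H2.
  apply Rabs_lt_between. unfold Rmin; repeat destruct Rle_dec; lra.
Qed.

Lemma deriv_weight (X : R -> R) s l L e : is_derive X s l ->
  is_derive (fun s => X s * exp (-L*s) + e) s ((l - L * X s) * exp (-L*s)).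
Proof.
  intros H. auto_derive.
  - repeat split; exists l; exact H.
  - match goal with |- context [Derive ?f s] => replace (Derive f s) with l by (symmetry; apply is_derive_unique; exact H) end. ring.
Qed.
Lemma SI_bound S I K th : 0 < th -> -th <= S -> -th <= I -> Rabs S <= K -> Rabs I <= K -> -(K*th) <= S*I.
Proof.
  intros H1 H2 H3 H4 H5. apply Rabs_le_between in H4. apply Rabs_le_between in H5.
  destruct (Rle_or_lt 0 S); destruct (Rle_or_lt 0 I); nra.
Qed.
Lemma amgm2 x y : 0 < x -> 0 < y -> 0 <= x*x*y + x*y*y + 1 - 3*x*y.
Proof. intros Hx Hy.
  set (u := sqrt (x*y)).
  assert (Hu : u*u = x*y) by (apply sqrt_sqrt; nra).
  assert (Hu0 : 0 <= u) by apply sqrt_pos. clearbody u.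
  assert (Hs : 2*u <= x + y).
  { destruct (Rle_or_lt (2*u) (x+y)) as [h|h]; [exact h|].
    assert (H1 : 0 < (2*u - (x+y))*(2*u+(x+y))) by (apply Rmult_lt_0_compat; lra). replace ((2*u - (x+y))*(2*u+(x+y))) with (4*(u*u) - (x+y)*(x+y)) in H1 by ring. rewrite Hu in H1. assert (H : 0 <= (x-y)*(x-y)) by exact (Rle_0_sqr (x-y)). exfalso. clear -H1 H. nra. }
  assert (0 <= (u-1)*(u-1)*(2*u+1)) by (apply Rmult_le_pos; [exact (Rle_0_sqr (u-1)) | lra]).
  replace (x*x*y + x*y*y + 1 - 3*x*y) with ((x*y)*(x+y) + 1 - 3*(x*y)) by ring.
  rewrite <- Hu. nra.
Qed.
Lemma amgm x y z : 0 < x -> 0 < y -> 0 < z -> x*y*z = 1 -> 3 <= x + y + z.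
Proof. intros Hx Hy Hz H.
  pose proof (amgm2 x y Hx Hy).
  assert (z = / (x*y)). { apply (Rmult_eq_reg_l (x*y)); [|nra]. rewrite Rinv_r by nra. lra. }
  assert (0 < x*y) by nra.
  assert (3 * (x*y) <= (x+y+z)*(x*y)).
  { replace ((x+y+z)*(x*y)) with (x*x*y + x*y*y + 1) by (rewrite <- H; ring). lra. }
  nra.
Qed.

Definition prm N mu beta sigma gamma p rho :=
  0<N /\ 0<mu /\ 0<beta /\ 0<sigma /\ 0<gamma /\ 0<p /\ 0<rho /\ rho<1.

Definition sys N mu beta sigma gamma p rho (S E I : R -> R) :=
  forall t, 0 <= t ->
    is_derive S t (fS N mu beta rho p (S t) (E t) (I t)) /\
    is_derive E t (fE N mu beta rho sigma (S t) (E t) (I t)) /\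
    is_derive I t (fI mu sigma gamma (S t) (E t) (I t)).

Lemma min3_cases a b c : Rmin a (Rmin b c) = a \/ Rmin a (Rmin b c) = b \/ Rmin a (Rmin b c) = c.
Proof. unfold Rmin; repeat destruct Rle_dec; auto. Qed.

Lemma min3_le a b c : Rmin a (Rmin b c) <= a /\ Rmin a (Rmin b c) <= b /\ Rmin a (Rmin b c) <= c.
Proof. unfold Rmin; repeat destruct Rle_dec; lra. Qed.

Lemma bound_on (f : R -> R) a b : a <= b -> (forall c, a <= c <= b -> continuity_pt f c) ->
  exists K, 0 <= K /\ forall c, a <= c <= b -> Rabs (f c) <= K.
Proof.
  intros Hab Hc.
  destruct (continuity_ab_maj (fun s => Rabs (f s)) a b Hab) as [M [HM _]].
  - intros c Hc'. apply (continuity_pt_comp f Rabs c); [apply Hc; exact Hc'| apply Rcontinuity_abs].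
  - exists (Rabs (f M)). split; [apply Rabs_pos| exact HM].
Qed.

Lemma caseS mu N a pN I K th L dS : 0 < mu -> 0 < N -> 0 < a -> 0 < pN -> 0 < th ->
  Rabs I <= K -> a * K < L ->
  dS = mu * N - a * (-th) * I - pN * (-th) - mu * (-th) ->
  0 < dS + L * th.
Proof. intros. apply Rabs_le_between in H4. subst dS.
  assert (0 <= a * th * (I + K)) by (apply Rmult_le_pos; [nra|lra]).
  assert (0 < th * (L - a*K)) by (apply Rmult_lt_0_compat; lra). nra. Qed.

Lemma caseE a S I K th L b dE : 0 < a -> 0 < b -> 0 < th ->
  -th <= S -> -th <= I -> Rabs S <= K -> Rabs I <= K -> a * K < L ->
  dE = a * S * I - b * (-th) -> 0 < dE + L * th.
Proof.
  intros. pose proof (SI_bound S I K th H1 H2 H3 H4 H5). subst dE.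
  assert (0 <= a * (S*I + K*th)) by (apply Rmult_le_pos; lra).
  assert (0 < th * (L - a*K)) by (apply Rmult_lt_0_compat; lra). nra.
Qed.

Lemma caseI sigma c E th L dI : 0 < sigma -> 0 < c -> 0 < th -> -th <= E -> sigma < L ->
  dI = sigma * E - c * (-th) -> 0 < dI + L * th.
Proof. intros. subst. nra. Qed.

Lemma positivity N mu beta sigma gamma p rho S E I :
  prm N mu beta sigma gamma p rho -> sys N mu beta sigma gamma p rho S E I ->
  0 <= S 0 -> 0 <= E 0 -> 0 <= I 0 ->
  forall t1, 0 <= t1 -> 0 <= S t1 /\ 0 <= E t1 /\ 0 <= I t1.
Proof.
  intros [hN [hmu [hbeta [hsigma [hgamma [hp [hrho0 hrho1]]]]]]] Hsys HS0 HE0 HI0 t1 Ht1.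
  set (a := beta * (1 - rho) / N).
  assert (ha : 0 < a) by (unfold a; apply Rdiv_lt_0_compat; nra).
  assert (HcS : forall c, 0 <= c -> continuity_pt S c) by (intros c Hc; exact (deriv_cont _ _ _ (proj1 (Hsys c Hc)))).
  assert (HcE : forall c, 0 <= c -> continuity_pt E c) by (intros c Hc; exact (deriv_cont _ _ _ (proj1 (proj2 (Hsys c Hc))))).
  assert (HcI : forall c, 0 <= c -> continuity_pt I c) by (intros c Hc; exact (deriv_cont _ _ _ (proj2 (proj2 (Hsys c Hc))))).
  destruct (bound_on S 0 t1 Ht1) as [K1 [HK1 HSb]]; [intros c Hc; apply HcS; lra|].
  destruct (bound_on I 0 t1 Ht1) as [K2 [HK2 HIb]]; [intros c Hc; apply HcI; lra|].
  set (K := Rmax K1 K2).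
  assert (HSK : forall c, 0 <= c <= t1 -> Rabs (S c) <= K) by (intros c Hc; eapply Rle_trans; [apply HSb; exact Hc| apply Rmax_l]).
  assert (HIK : forall c, 0 <= c <= t1 -> Rabs (I c) <= K) by (intros c Hc; eapply Rle_trans; [apply HIb; exact Hc| apply Rmax_r]).
  assert (HK : 0 <= K) by (unfold K; eapply Rle_trans; [exact HK1| apply Rmax_l]).
  set (L := a * K + sigma + 1).
  set (m0 := Rmin (S t1) (Rmin (E t1) (I t1))).
  destruct (Rle_or_lt 0 m0) as [Hm0|Hm0].
  { destruct (min3_le (S t1) (E t1) (I t1)) as [A1 [A2 A3]]. fold m0 in A1, A2, A3. lra. }
  exfalso.
  set (eps := - m0 * exp (-L*t1) / 2).
  assert (Heps : 0 < eps) by (unfold eps; pose proof (exp_pos (-L*t1)); nra).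
  set (Y := fun (X : R -> R) s => X s * exp (-L*s) + eps).
  set (h := fun s => Rmin (Y S s) (Rmin (Y E s) (Y I s))).
  assert (HY : forall X, (forall c, 0 <= c -> continuity_pt X c) -> forall c, 0 <= c -> continuity_pt (Y X) c).
  { intros X HX c Hc. unfold Y.
    apply continuity_pt_plus; [|apply continuity_pt_const; intros u v; reflexivity].
    apply continuity_pt_mult; [apply HX; exact Hc|].
    apply (continuity_pt_comp (fun s => -L*s) exp c).
    - apply continuity_pt_mult; [apply continuity_pt_const; intros u v; reflexivity| apply derivable_continuous_pt, derivable_pt_id].
    - apply derivable_continuous_pt, derivable_pt_exp. }
  assert (Hh_cont : forall c, 0 <= c -> continuity_pt h c).
  { intros c Hc. unfold h. apply cont_min; [apply HY; auto|]. apply cont_min; apply HY; auto. }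
  destruct (continuity_ab_min h 0 t1 Ht1) as [m [Hmin Hm]]; [intros c Hc; apply Hh_cont; lra|].
  assert (Ht1neg : h t1 < 0).
  { destruct (min3_le (Y S t1) (Y E t1) (Y I t1)) as [A1 [A2 A3]].
    pose proof (exp_pos (-L*t1)) as He.
    destruct (min3_cases (S t1) (E t1) (I t1)) as [B|[B|B]]; fold m0 in B.
    - assert (Y S t1 < 0) by (unfold Y, eps; rewrite B; nra). unfold h; lra.
    - assert (Y E t1 < 0) by (unfold Y, eps; rewrite B; nra). unfold h; lra.
    - assert (Y I t1 < 0) by (unfold Y, eps; rewrite B; nra). unfold h; lra. }
  assert (H0pos : 0 < h 0).
  { unfold h, Y. rewrite Rmult_0_r, exp_0, !Rmult_1_r.
    apply Rmin_Rgt; split; [lra|]. apply Rmin_Rgt; split; lra. }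
  assert (Hmt1 : h m <= h t1) by (apply Hmin; lra).
  assert (Hmpos : 0 < m).
  { destruct (Rle_or_lt m 0) as [H|H]; [|exact H].
    assert (m = 0) by lra. subst m. lra. }
  set (w := exp (L*m)).
  assert (Hw : 0 < w) by apply exp_pos.
  assert (Hew : exp (-L*m) * w = 1).
  { unfold w. rewrite <- exp_plus. replace (-L*m + L*m) with 0 by ring. apply exp_0. }
  set (th := (eps - h m) * w).
  assert (Hth : 0 < th) by (unfold th; nra).
  assert (Hlow : forall X, h m <= Y X m -> -th <= X m).
  { intros X HX. unfold Y in HX. unfold th.
    assert (X m * exp (-L*m) * w >= (h m - eps) * w) by (apply Rmult_ge_compat_r; lra).
    replace (X m * exp (-L*m) * w) with (X m) in H by (rewrite Rmult_assoc, Hew; ring). lra. }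
  destruct (min3_le (Y S m) (Y E m) (Y I m)) as [A1 [A2 A3]].
  fold (h m) in A1, A2, A3.
  pose proof (Hlow S A1) as LS. pose proof (Hlow E A2) as LE. pose proof (Hlow I A3) as LI.
  assert (Hexact : forall X, h m = Y X m -> X m = -th).
  { intros X HX. assert (Ht : th = - X m * (exp (-L*m) * w)) by (unfold th; rewrite HX; unfold Y; ring).
    rewrite Hew in Ht. lra. }
  assert (Hder : forall X dX, is_derive X m dX -> h m = Y X m -> (forall s, h s <= Y X s) -> dX + L * th <= 0).
  { intros X dX HdX HX Hall.
    pose proof (deriv_weight X m dX L eps HdX) as HdY.
    assert (Hle : (dX - L * X m) * exp (-L*m) <= 0).
    { apply (min_deriv (Y X) 0 m); [exact Hmpos| exact HdY|].
      intros s Hs. rewrite <- HX. apply Rle_trans with (h s); [apply Hmin; lra| apply Hall]. }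
    rewrite (Hexact X HX) in Hle.
    assert (0 < exp (-L*m)) by apply exp_pos. nra. }
  destruct (Hsys m ltac:(lra)) as [DS [DE DI]].
  assert (HmK : 0 <= m <= t1) by lra.
  destruct (min3_cases (Y S m) (Y E m) (Y I m)) as [B|[B|B]]; fold (h m) in B.
  - pose proof (Hder S _ DS B (fun s => proj1 (min3_le (Y S s) (Y E s) (Y I s)))) as C. rewrite (Hexact S B) in C.
    assert (0 < fS N mu beta rho p (-th) (E m) (I m) + L * th).
    { apply (caseS mu N a (p/N) (I m) K th L); try lra.
      - apply Rdiv_lt_0_compat; lra.
      - apply HIK; exact HmK.
      - unfold L; lra.
      - unfold fS, a. field. lra. }
    lra.
  - pose proof (Hder E _ DE B (fun s => proj1 (proj2 (min3_le (Y S s) (Y E s) (Y I s))))) as C. rewrite (Hexact E B) in C.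
    assert (0 < fE N mu beta rho sigma (S m) (-th) (I m) + L * th).
    { apply (caseE a (S m) (I m) K th L (sigma + mu)); try lra.
      - apply HSK; exact HmK.
      - apply HIK; exact HmK.
      - unfold L; lra.
      - unfold fE, a. field. lra. }
    lra.
  - pose proof (Hder I _ DI B (fun s => proj2 (proj2 (min3_le (Y S s) (Y E s) (Y I s))))) as C. rewrite (Hexact I B) in C.
    assert (0 < fI mu sigma gamma (S m) (E m) (-th) + L * th).
    { apply (caseI sigma (gamma + mu) (E m) th L); try lra.
      - unfold L; nra.
      - unfold fI. ring. }
    lra.
Qed.

Ltac rd H := match type of H with is_derive ?f ?t ?v =>
  match goal with |- context [Derive ?g t] =>
    replace (Derive g t) with v by (symmetry; apply is_derive_unique; exact H) end end.

Lemma upper N mu beta sigma gamma p rho S E I :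
  prm N mu beta sigma gamma p rho -> sys N mu beta sigma gamma p rho S E I ->
  S 0 + E 0 + I 0 <= N ->
  (forall t, 0 <= t -> 0 <= S t /\ 0 <= E t /\ 0 <= I t) ->
  forall t, 0 <= t -> S t + E t + I t <= N.
Proof.
  intros [hN [hmu [hbeta [hsigma [hgamma [hp [hrho0 hrho1]]]]]]] Hsys H0 Hpos t Ht.
  set (g := fun s => (S s + E s + I s - N) * exp (mu * s)).
  set (dg := fun s => - (p / N * S s + gamma * I s) * exp (mu * s)).
  destruct (mvt g dg 0 t Ht) as [c [Hc Heq]].
  { intros y Hy. destruct (Hsys y ltac:(lra)) as [DS [DE DI]].
    unfold g, dg. auto_derive.
    - repeat split; eexists; eassumption.
    - rd DS. rd DE. rd DI. unfold fS, fE, fI. field. lra. }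
  assert (dg c <= 0).
  { unfold dg. destruct (Hpos c ltac:(lra)) as [A [B C]].
    pose proof (exp_pos (mu * c)).
    assert (0 <= p / N * S c) by (apply Rmult_le_pos; [apply Rlt_le, Rdiv_lt_0_compat|]; lra).
    assert (0 <= (p / N * S c + gamma * I c) * exp (mu * c)) by (apply Rmult_le_pos; nra).
    lra. }
  assert (g t <= g 0) by nra.
  unfold g in H1. rewrite Rmult_0_r, exp_0, Rmult_1_r in H1.
  pose proof (exp_pos (mu * t)).
  destruct (Rle_or_lt (S t + E t + I t) N); [assumption|]. nra.
Qed.

Lemma bw (u : nat -> R) M : (forall n, 0 <= u n <= M) ->
  exists phi : nat -> nat, (forall n, (phi n < phi (S n))%nat) /\ exists l : R, is_lim_seq (fun n => u (phi n)) l.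
Proof.
  intros Hb.
  destruct (Bolzano_Weierstrass u (fun c => 0 <= c <= M) (compact_P3 0 M) Hb) as [l Hl].
  assert (Hk : forall k N0 : nat, exists q, (N0 <= q)%nat /\ Rabs (u q - l) < / (INR k + 1)).
  { intros k N0. destruct (Hl (fun y => Rabs (y - l) < / (INR k + 1)) N0) as [q Hq].
    - assert (Hp : 0 < / (INR k + 1)) by (apply Rinv_0_lt_compat; pose proof (pos_INR k); lra).
      exists (mkposreal _ Hp). intros y Hy. exact Hy.
    - exists q; exact Hq. }
  set (F := fun k N0 => proj1_sig (constructive_indefinite_description _ (Hk k N0))).
  assert (HF : forall k N0, (N0 <= F k N0)%nat /\ Rabs (u (F k N0) - l) < / (INR k + 1)).
  { intros k N0. unfold F. destruct (constructive_indefinite_description _ (Hk k N0)) as [q Hq]. exact Hq. }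
  set (phi := fix f n := match n with O => F O O | S n' => F n (S (f n')) end).
  exists phi. split.
  - intros n. simpl. destruct (HF (S n) (S (phi n))). lia.
  - exists l. apply is_lim_seq_spec. intros eps.
    destruct (nfloor_ex (/ eps)) as [n0 Hn0]. { apply Rlt_le, Rinv_0_lt_compat, cond_pos. }
    exists n0. intros n Hn.
    assert (Hph : Rabs (u (phi n) - l) < / (INR n + 1)).
    { destruct n; simpl; apply HF. }
    eapply Rlt_le_trans; [exact Hph|].
    assert (Hle : INR n0 <= INR n) by (apply le_INR; exact Hn).
    pose proof (cond_pos eps).
    assert (/eps < INR n + 1) by lra.
    apply Rlt_le. rewrite <- (Rinv_inv eps). apply Rinv_lt_contravar; [|exact H0].
    apply Rmult_lt_0_compat; [apply Rinv_0_lt_compat; exact H| pose proof (pos_INR n); lra].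
Qed.

Lemma strict_mono (phi : nat -> nat) : (forall n, (phi n < phi (S n))%nat) ->
  forall m n, (m < n)%nat -> (phi m < phi n)%nat.
Proof.
  intros H m n Hmn. induction n; [lia|].
  destruct (Nat.eq_dec m n) as [->|Hne]; [apply H|].
  specialize (H n). specialize (IHn ltac:(lia)). lia.
Qed.

Lemma mono_ge (phi : nat -> nat) : (forall n, (phi n < phi (S n))%nat) -> forall n, (n <= phi n)%nat.
Proof. intros H n. induction n; [lia|]. specialize (H n). lia. Qed.

Lemma comp_inc (f g : nat -> nat) : (forall n, (f n < f (S n))%nat) -> (forall n, (g n < g (S n))%nat) ->
  forall n, (f (g n) < f (g (S n)))%nat.
Proof. intros Hf Hg n. apply strict_mono; auto. Qed.

Lemma inv_small eps : 0 < eps -> exists n0 : nat, forall n, (n0 <= n)%nat -> / (INR n + 1) < eps.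
Proof.
  intros He. destruct (nfloor_ex (/ eps)) as [n0 Hn0]; [apply Rlt_le, Rinv_0_lt_compat; exact He|].
  exists n0. intros n Hn. assert (INR n0 <= INR n) by (apply le_INR; exact Hn).
  assert (/eps < INR n + 1) by lra.
  rewrite <- (Rinv_inv eps). apply Rinv_lt_contravar; [|exact H0].
  apply Rmult_lt_0_compat; [apply Rinv_0_lt_compat; exact He| pose proof (pos_INR n); lra].
Qed.

Lemma eventually_delta N (x : R -> R * R * R) :
  (forall t, 0 <= t -> (0 <= fst (fst (x t)) <= N) /\ (0 <= snd (fst (x t)) <= N) /\ (0 <= snd (x t) <= N)) ->
  (forall y, omega_limit x y -> inIntOmega N y) ->
  exists d T, 0 < d /\ 0 <= T /\ forall t, T <= t ->
    d <= fst (fst (x t)) /\ d <= snd (fst (x t)) /\ d <= snd (x t).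
Proof.
  intros Hb Hint.
  set (Sf := fun s => fst (fst (x s))). set (Ef := fun s => snd (fst (x s))). set (If := fun s => snd (x s)).
  apply NNPP; intro Hn.
  assert (Hex : forall n : nat, exists t, INR n <= t /\ Rmin (Sf t) (Rmin (Ef t) (If t)) < / (INR n + 1)).
  { intro n. apply NNPP; intro Hc. apply Hn. exists (/ (INR n + 1)), (INR n).
    split; [apply Rinv_0_lt_compat; pose proof (pos_INR n); lra|].
    split; [apply pos_INR|]. intros t Ht.
    destruct (Rlt_or_le (Rmin (Sf t) (Rmin (Ef t) (If t))) (/ (INR n + 1))) as [H|H].
    - exfalso; apply Hc; exists t; split; assumption.
    - destruct (min3_le (Sf t) (Ef t) (If t)) as [A [B C]]. unfold Sf, Ef, If in *. lra. }
  set (tn := fun n => proj1_sig (constructive_indefinite_description _ (Hex n))).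
  assert (Htn : forall n, INR n <= tn n /\ Rmin (Sf (tn n)) (Rmin (Ef (tn n)) (If (tn n))) < / (INR n + 1)).
  { intro n. unfold tn. destruct (constructive_indefinite_description _ (Hex n)) as [t Ht]. exact Ht. }
  assert (Htn0 : forall n, 0 <= tn n) by (intro n; pose proof (pos_INR n); pose proof (proj1 (Htn n)); lra).
  destruct (bw (fun n => Sf (tn n)) N) as [p1 [Hp1 [l1 Hl1]]]; [intro n; apply (Hb _ (Htn0 n))|].
  destruct (bw (fun n => Ef (tn (p1 n))) N) as [p2 [Hp2 [l2 Hl2]]]; [intro n; apply (Hb _ (Htn0 _))|].
  destruct (bw (fun n => If (tn (p1 (p2 n)))) N) as [p3 [Hp3 [l3 Hl3]]]; [intro n; apply (Hb _ (Htn0 _))|].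
  set (psi := fun n => p1 (p2 (p3 n))).
  assert (Hp23 : forall n, (p2 (p3 n) < p2 (p3 (S n)))%nat) by (apply comp_inc; assumption).
  assert (Hpsi : forall n, (psi n < psi (S n))%nat) by (intro n; unfold psi; apply (comp_inc p1 (fun n => p2 (p3 n))); assumption).
  assert (L1 : is_lim_seq (fun n => Sf (tn (psi n))) l1).
  { apply (is_lim_seq_subseq (fun n => Sf (tn (p1 n))) l1 (fun n => p2 (p3 n))); [apply eventually_subseq; exact Hp23| exact Hl1]. }
  assert (L2 : is_lim_seq (fun n => Ef (tn (psi n))) l2).
  { apply (is_lim_seq_subseq (fun n => Ef (tn (p1 (p2 n)))) l2 p3); [apply eventually_subseq; exact Hp3| exact Hl2]. }
  assert (Hom : omega_limit x (l1, l2, l3)).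
  { exists (fun n => tn (psi n)). split; [|split; [exact L1|split; [exact L2| exact Hl3]]].
    apply (is_lim_seq_le_p_loc INR). { exists O. intros n _. pose proof (proj1 (Htn (psi n))).
      pose proof (le_INR _ _ (mono_ge psi Hpsi n)). lra. }
    exact is_lim_seq_INR. }
  destruct (Hint _ Hom) as [h1 [h2 [h3 _]]].
  set (d0 := Rmin l1 (Rmin l2 l3)).
  assert (Hd0 : 0 < d0) by (unfold d0; apply Rmin_Rgt; split; [lra|apply Rmin_Rgt; lra]).
  apply is_lim_seq_spec in L1. apply is_lim_seq_spec in L2. apply is_lim_seq_spec in Hl3.
  assert (Hd2 : 0 < d0 / 2) by lra.
  specialize (L1 (mkposreal _ Hd2)). specialize (L2 (mkposreal _ Hd2)). specialize (Hl3 (mkposreal _ Hd2)).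
  destruct (inv_small (d0/2) Hd2) as [n0 Hn0].
  destruct (filter_and _ _ L1 (filter_and _ _ L2 Hl3)) as [n1 Hn1].
  set (n := max n0 n1).
  destruct (Hn1 n ltac:(lia)) as [A1 [A2 A3]]. simpl in A1, A2, A3.
  apply Rabs_lt_between in A1. apply Rabs_lt_between in A2. apply Rabs_lt_between in A3.
  pose proof (Hn0 n ltac:(lia)) as B.
  pose proof (proj2 (Htn (psi n))) as C.
  assert (Hinv : / (INR (psi n) + 1) <= / (INR n + 1)).
  { apply Rinv_le_contravar; [pose proof (pos_INR n); lra|]. pose proof (le_INR _ _ (mono_ge psi Hpsi n)). lra. }
  destruct (min3_le l1 l2 l3) as [D1 [D2 D3]]. fold d0 in D1, D2, D3.
  destruct (min3_cases (Sf (tn (psi n))) (Ef (tn (psi n))) (If (tn (psi n)))) as [F|[F|F]]; rewrite F in C; unfold psi, Sf, Ef, If in *; simpl in *; lra.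
Qed.

Lemma exp_lin z : 0 <= z -> 1 + z <= exp z.
Proof.
  intros Hz. destruct (Req_dec z 0) as [->|Hne]; [rewrite exp_0; lra|].
  apply Rlt_le, exp_ineq1; exact Hne.
Qed.

Lemma S0_le_Se N mu beta sigma gamma p rho : 0<N -> 0<mu -> 0<beta -> 0<sigma -> 0<gamma -> 0<p -> 0<rho -> rho<1 ->
  mu * N * sigma * beta * (1 - rho) - (sigma + mu) * (gamma + mu) * (p + mu * N) <= 0 ->
  mu * N / (p / N + mu) <= (sigma + mu) * (gamma + mu) * N / (sigma * beta * (1 - rho)).
Proof.
intros.
assert (h1 : 0 < 1 - rho) by lra.
assert (hsb : 0 < sigma * beta * (1 - rho)) by (repeat apply Rmult_lt_0_compat; lra).
assert (hpm : 0 < p + mu * N) by (pose proof (Rmult_lt_0_compat _ _ H0 H); lra).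
replace (mu * N / (p / N + mu)) with (mu * N * N / (p + mu * N)) by (field; lra).
apply (Rmult_le_reg_r ((p + mu * N) * (sigma * beta * (1 - rho)))); [apply Rmult_lt_0_compat; lra|].
field_simplify; [|lra|lra].
nra.
Qed.

Lemma R0_le_1_absurd N mu beta sigma gamma p rho S E I d T :
  prm N mu beta sigma gamma p rho -> sys N mu beta sigma gamma p rho S E I ->
  (forall t, 0 <= t -> 0 <= S t /\ 0 <= E t /\ 0 <= I t /\ S t + E t + I t <= N) ->
  0 < d -> 0 <= T -> (forall t, T <= t -> d <= S t /\ d <= E t /\ d <= I t) ->
  Ie N mu beta sigma gamma rho p <= 0 -> False.
Proof.
  intros Hprm Hsys Hb Hd HT Hdel HIe.
  destruct Hprm as [hN [hmu [hbeta [hsigma [hgamma [hp [hrho0 hrho1]]]]]]].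
  set (a := beta * (1 - rho) / N).
  assert (ha : 0 < a) by (unfold a; apply Rdiv_lt_0_compat; nra).
  set (dd := p / N + mu).
  assert (hdd : 0 < dd) by (unfold dd; assert (0 < p/N) by (apply Rdiv_lt_0_compat; lra); lra).
  set (K1 := a * d + dd).
  assert (hK1 : 0 < K1) by (unfold K1; nra).
  set (S1 := mu * N / K1).
  set (Sst := Se N mu beta sigma gamma rho).
  assert (Hb1 : 0 < beta * (1 - rho)) by nra.
  assert (HS0 : mu * N / dd <= Sst).
  { unfold Ie in HIe. unfold Sst, Se, dd.
    assert (Hden : 0 < (sigma + mu) * (gamma + mu) * beta * (1 - rho)) by (repeat apply Rmult_lt_0_compat; lra).
    assert (Hnum : mu * N * sigma * beta * (1 - rho) - (sigma + mu) * (gamma + mu) * (p + mu * N) <= 0).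
    { destruct (Rle_or_lt (mu * N * sigma * beta * (1 - rho) - (sigma + mu) * (gamma + mu) * (p + mu * N)) 0) as [h|h]; [exact h|].
      exfalso. assert (0 < (mu * N * sigma * beta * (1 - rho) - (sigma + mu) * (gamma + mu) * (p + mu * N)) / ((sigma + mu) * (gamma + mu) * beta * (1 - rho))) by (apply Rdiv_lt_0_compat; assumption). lra. }
    apply S0_le_Se; assumption. }
  assert (HS1 : S1 < mu * N / dd).
  { unfold S1. apply Rmult_lt_compat_l; [nra|]. apply Rinv_lt_contravar; [nra|]. unfold K1; nra. }
  assert (HK1S1 : K1 * S1 = mu * N) by (unfold S1; field; lra).
  set (gap := Sst - S1).
  assert (Hgap : 0 < gap) by (unfold gap; lra).
  set (g := fun s => (S s - S1) * exp (K1 * s)).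
  set (dg := fun s => a * S s * (d - I s) * exp (K1 * s)).
  assert (HgT : forall t, T <= t -> g t <= g T).
  { intros t Ht. destruct (mvt g dg T t Ht) as [c [Hc Heq]].
    - intros y Hy. destruct (Hsys y ltac:(lra)) as [DS _].
      unfold g, dg. auto_derive.
      + repeat split; eexists; eassumption.
      + rd DS. unfold fS. rewrite <- HK1S1. unfold K1, dd, a. field. lra.
    - assert (dg c <= 0).
      { unfold dg. destruct (Hdel c ltac:(lra)) as [_ [_ HI]]. destruct (Hb c ltac:(lra)) as [HSc _].
        assert (0 <= a * S c * (I c - d) * exp (K1 * c)).
        { apply Rmult_le_pos; [|apply Rlt_le, exp_pos]. apply Rmult_le_pos; [|lra]. apply Rmult_le_pos; lra. }
        lra. }
      nra. }
  assert (HSlow : forall t, T + 2 * N / (gap * K1) <= t -> S t <= Sst - gap / 2).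
  { intros t Ht.
    assert (Hq : 0 <= 2 * N / (gap * K1)) by (apply Rlt_le, Rdiv_lt_0_compat; nra).
    destruct (Rle_or_lt (S t) (Sst - gap / 2)) as [h|h]; [exact h|exfalso].
    pose proof (HgT t ltac:(lra)) as H1. unfold g in H1.
    replace (K1 * t) with (K1 * T + K1 * (t - T)) in H1 by ring. rewrite exp_plus in H1.
    pose proof (exp_pos (K1 * T)) as E1.
    pose proof (exp_lin (K1 * (t - T)) ltac:(nra)) as E2.
    destruct (Hb T HT) as [A1 [A2 [A3 A4]]].
    assert (HS1p : 0 < S1) by (unfold S1; apply Rdiv_lt_0_compat; nra).
    assert (H2 : (S t - S1) * exp (K1 * (t - T)) <= N).
    { apply (Rmult_le_reg_l (exp (K1 * T))); [exact E1|]. nra. }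
    assert (H3 : gap / 2 * (1 + K1 * (t - T)) < N).
    { assert (gap / 2 < S t - S1) by (unfold gap in *; lra).
      assert (0 < 1 + K1 * (t - T)) by nra.
      nra. }
    assert (H4 : K1 * (t - T) >= 2 * N / gap).
    { replace (2 * N / gap) with (K1 * (2 * N / (gap * K1))) by (field; lra).
      apply Rle_ge, Rmult_le_compat_l; lra. }
    assert (gap / 2 * (K1 * (t - T)) >= gap / 2 * (2 * N / gap)) by (apply Rmult_ge_compat_l; lra).
    replace (gap / 2 * (2 * N / gap)) with N in H by (field; lra).
    nra. }
  set (T2 := T + 2 * N / (gap * K1)).
  assert (HT2 : T <= T2) by (unfold T2; assert (0 <= 2 * N / (gap * K1)) by (apply Rlt_le, Rdiv_lt_0_compat; nra); lra).
  set (kap := (sigma + mu) / sigma).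
  assert (hkap : 0 < kap) by (unfold kap; apply Rdiv_lt_0_compat; lra).
  set (W := fun s => E s + kap * I s).
  set (dW := fun s => a * I s * (S s - Sst)).
  set (r := a * d * (gap / 2)).
  assert (hr : 0 < r) by (unfold r; apply Rmult_lt_0_compat; [apply Rmult_lt_0_compat|]; lra).
  set (M := (N + kap * N) / r + 1).
  assert (hM : 0 < M) by (unfold M; assert (0 < (N + kap * N) / r) by (apply Rdiv_lt_0_compat; nra); lra).
  destruct (mvt W dW T2 (T2 + M) ltac:(lra)) as [c [Hc Heq]].
  { intros y Hy. destruct (Hsys y ltac:(lra)) as [_ [DE DI]].
    unfold W, dW. auto_derive.
    - repeat split; eexists; eassumption.
    - rd DE. rd DI. unfold fE, fI, kap, a, Sst, Se. field. repeat split; lra. }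
  assert (HdW : dW c <= - r).
  { unfold dW, r. destruct (Hdel c ltac:(lra)) as [_ [_ HI]].
    pose proof (HSlow c ltac:(unfold T2 in Hc; lra)) as HSc.
    assert (0 <= a * (I c - d) * (gap / 2)) by (apply Rmult_le_pos; [apply Rmult_le_pos|]; lra).
    assert (0 <= a * I c * (Sst - gap / 2 - S c)) by (apply Rmult_le_pos; [apply Rmult_le_pos|]; lra).
    nra. }
  destruct (Hb T2 ltac:(lra)) as [B1 [B2 [B3 B4]]].
  destruct (Hb (T2 + M) ltac:(lra)) as [C1 [C2 [C3 C4]]].
  assert (W (T2 + M) >= 0) by (unfold W; nra).
  assert (W T2 <= N + kap * N) by (unfold W; nra).
  assert (r * M > N + kap * N).
  { unfold M. rewrite Rmult_plus_distr_l. replace (r * ((N + kap * N) / r)) with (N + kap * N) by (field; lra). lra. }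
  nra.
Qed.

Lemma lyap_ineq (k Se Ee Ie sig d S E I N : R) :
  0 < k -> 0 < Se -> 0 < Ee -> 0 < Ie -> 0 < sig -> 0 < d -> 0 < S -> 0 < E -> 0 < I -> S <= N ->
  (d*Se + k - k/(Se*Ie)*S*I - d*S)*(1 - Se/S) + (k/(Se*Ie)*S*I - k/Ee*E)*(1 - Ee/E)
   + (k/Ee/sig)*(sig*E - sig*Ee/Ie*I)*(1 - Ie/I) <= -(d/N)*((S-Se)*(S-Se)).
Proof.
  intros. pose (x := Se/S). pose (y := S*I*Ee/(Se*Ie*E)). pose (z := E*Ie/(Ee*I)).
  assert (Hid : (d*Se + k - k/(Se*Ie)*S*I - d*S)*(1 - Se/S) + (k/(Se*Ie)*S*I - k/Ee*E)*(1 - Ee/E)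
   + (k/Ee/sig)*(sig*E - sig*Ee/Ie*I)*(1 - Ie/I) = - d * ((S-Se)*(S-Se)) / S + k * (3 - x - y - z)).
  { unfold x, y, z. field. repeat split; lra. }
  rewrite Hid.
  assert (Hx : 0 < x) by (unfold x; apply Rdiv_lt_0_compat; lra).
  assert (Hy : 0 < y) by (unfold y; apply Rdiv_lt_0_compat; repeat apply Rmult_lt_0_compat; lra).
  assert (Hz : 0 < z) by (unfold z; apply Rdiv_lt_0_compat; repeat apply Rmult_lt_0_compat; lra).
  assert (Hxyz : x*y*z = 1) by (unfold x, y, z; field; repeat split; lra).
  pose proof (amgm x y z Hx Hy Hz Hxyz).
  assert (HN : 0 < N) by lra.
  assert (Hq2 : d * ((S-Se)*(S-Se)) / N <= d * ((S-Se)*(S-Se)) / S).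
  { apply Rmult_le_compat_l; [apply Rmult_le_pos; [lra| apply Rle_0_sqr]|].
    apply Rinv_le_contravar; lra. }
  assert (0 <= k * (x + y + z - 3)) by (apply Rmult_le_pos; lra).
  unfold Rdiv in *. lra.
Qed.

Lemma abs_add_le u v U V : Rabs u <= U -> Rabs v <= V -> Rabs (u + v) <= U + V.
Proof. intros. eapply Rle_trans; [apply Rabs_triang|lra]. Qed.
Lemma abs_sub_le u v U V : Rabs u <= U -> Rabs v <= V -> Rabs (u - v) <= U + V.
Proof. intros. eapply Rle_trans; [apply Rabs_triang|]. rewrite Rabs_Ropp. lra. Qed.
Lemma abs_mul_le u v U V : Rabs u <= U -> Rabs v <= V -> Rabs (u * v) <= U * V.
Proof. intros. rewrite Rabs_mult. apply Rmult_le_compat; auto; apply Rabs_pos. Qed.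
Lemma abs_opp_le u U : Rabs u <= U -> Rabs (- u) <= U.
Proof. rewrite Rabs_Ropp. auto. Qed.

Ltac bnd := first
  [ eassumption
  | eapply abs_add_le; [bnd|bnd]
  | eapply abs_sub_le; [bnd|bnd]
  | eapply abs_mul_le; [bnd|bnd]
  | eapply abs_opp_le; bnd
  | apply Rle_refl ].

Lemma core2 (f df ddf : R -> R) T B l :
  (forall t, T <= t -> is_derive f t (df t)) ->
  (forall t, T <= t -> is_derive df t (ddf t)) ->
  (forall t, T <= t -> Rabs (ddf t) <= B) ->
  conv f l -> conv df 0.
Proof.
  intros Hf Hdf HB Hc.
  assert (HL := lip_of_deriv df ddf T B Hdf HB).
  intros eps Heps.
  destruct (core f df df T B l Hf (fun t _ => Rle_refl _) HL Hc eps Heps) as [T1 H1].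
  assert (Hc' : conv (fun s => - f s) (- l)).
  { intros e He. destruct (Hc e He) as [T0 H0]. exists T0. intros t Ht.
    replace (- f t - - l) with (- (f t - l)) by ring. rewrite Rabs_Ropp. auto. }
  assert (Hf' : forall t, T <= t -> is_derive (fun s => - f s) t (- df t)).
  { intros t Ht. apply (is_derive_opp f t (df t)). auto. }
  assert (HL' : forall t u, T <= t -> T <= u -> Rabs (- df t - - df u) <= B * Rabs (t - u)).
  { intros t u Ht Hu. replace (- df t - - df u) with (- (df t - df u)) by ring. rewrite Rabs_Ropp. auto. }
  destruct (core (fun s => - f s) (fun s => - df s) (fun s => - df s) T B (- l) Hf' (fun t _ => Rle_refl _) HL' Hc' eps Heps) as [T2 H2].
  exists (Rmax T1 T2). intros t Ht.
  pose proof (H1 t (Rle_trans _ _ _ (Rmax_l _ _) Ht)). pose proof (H2 t (Rle_trans _ _ _ (Rmax_r _ _) Ht)).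
  rewrite Rminus_0_r. apply Rabs_def1; lra.
Qed.

Lemma xlnx x a : 0 < x -> 0 < a -> a - a * ln a <= x - a * ln x.
Proof.
  intros Hx Ha. pose proof (exp_lin (ln (x / a))).
  destruct (Rle_or_lt 0 (ln (x/a))) as [H0|H0].
  - specialize (H H0). rewrite exp_ln in H by (apply Rdiv_lt_0_compat; lra).
    rewrite ln_div in H by lra.
    apply (Rmult_le_compat_l a) in H; [|lra]. unfold Rdiv in H. field_simplify in H; [|lra]. nra.
  - assert (Hl : 1 + ln (x/a) <= exp (ln (x/a))).
    { destruct (Req_dec (ln (x/a)) 0) as [->|hne]; [rewrite exp_0; lra| apply Rlt_le, exp_ineq1; exact hne]. }
    rewrite exp_ln in Hl by (apply Rdiv_lt_0_compat; lra).
    rewrite ln_div in Hl by lra.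
    apply (Rmult_le_compat_l a) in Hl; [|lra]. unfold Rdiv in Hl. field_simplify in Hl; [|lra]. nra.
Qed.

Lemma conv_main N mu beta sigma gamma p rho S E I d T :
  prm N mu beta sigma gamma p rho -> sys N mu beta sigma gamma p rho S E I ->
  (forall t, 0 <= t -> 0 <= S t /\ 0 <= E t /\ 0 <= I t /\ S t + E t + I t <= N) ->
  0 < d -> 0 <= T -> (forall t, T <= t -> d <= S t /\ d <= E t /\ d <= I t) ->
  0 < Ie N mu beta sigma gamma rho p ->
  conv S (Se N mu beta sigma gamma rho) /\ conv E (Ee N mu beta sigma gamma rho p) /\
  conv I (Ie N mu beta sigma gamma rho p).
Proof.
  intros Hprm Hsys Hb Hd HT Hdel HIe.
  destruct Hprm as [hN [hmu [hbeta [hsigma [hgamma [hp [hrho0 hrho1]]]]]]].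
  set (a := beta * (1 - rho) / N).
  assert (ha : 0 < a) by (unfold a; apply Rdiv_lt_0_compat; nra).
  set (dd := p / N + mu).
  assert (hpN : 0 < p / N) by (apply Rdiv_lt_0_compat; lra).
  assert (hdd : 0 < dd) by (unfold dd; lra).
  set (Sst := Se N mu beta sigma gamma rho).
  set (Ist := Ie N mu beta sigma gamma rho p).
  set (Est := Ee N mu beta sigma gamma rho p).
  change (0 < Ist) in HIe.
  assert (hb1 : 0 < beta * (1 - rho)) by nra.
  assert (hSst : 0 < Sst).
  { unfold Sst, Se. apply Rdiv_lt_0_compat; repeat apply Rmult_lt_0_compat; lra. }
  assert (hEst : 0 < Est).
  { unfold Est, Ee. apply Rmult_lt_0_compat; [apply Rdiv_lt_0_compat; lra| exact HIe]. }
  set (k := a * Sst * Ist).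
  assert (hk : 0 < k) by (unfold k; apply Rmult_lt_0_compat; [apply Rmult_lt_0_compat|]; assumption).
  assert (Ha : a = k / (Sst * Ist)) by (unfold k; field; split; lra).
  assert (Hbb : sigma + mu = k / Est).
  { unfold k, Est, Ee, a, Sst, Se. fold Ist. field. repeat split; lra. }
  assert (Hcc : gamma + mu = sigma * Est / Ist).
  { unfold Est, Ee. fold Ist. field. lra. }
  assert (HL : mu * N = dd * Sst + k).
  { unfold k, a, dd, Ist, Ie, Sst, Se. field. repeat split; lra. }
  set (kap := (sigma + mu) / sigma).
  assert (Hkap : kap = k / Est / sigma) by (unfold kap; rewrite Hbb; reflexivity).
  assert (hkap : 0 < kap) by (unfold kap; apply Rdiv_lt_0_compat; lra).
  assert (E1 : forall s e i, fS N mu beta rho p s e i = dd * Sst + k - k / (Sst * Ist) * s * i - dd * s).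
  { intros. unfold fS. change (beta * (1 - rho) / N) with a. rewrite Ha, HL. unfold dd. ring. }
  assert (E2 : forall s e i, fE N mu beta rho sigma s e i = k / (Sst * Ist) * s * i - k / Est * e).
  { intros. unfold fE. change (beta * (1 - rho) / N) with a. rewrite Ha, Hbb. ring. }
  assert (E3 : forall s e i, fI mu sigma gamma s e i = sigma * e - sigma * Est / Ist * i).
  { intros. unfold fI. rewrite Hcc. ring. }
  set (V := fun s => S s - Sst * ln (S s) + (E s - Est * ln (E s)) + kap * (I s - Ist * ln (I s))).
  set (FS := fun s => fS N mu beta rho p (S s) (E s) (I s)).
  set (FE := fun s => fE N mu beta rho sigma (S s) (E s) (I s)).
  set (FI := fun s => fI mu sigma gamma (S s) (E s) (I s)).
  set (dV := fun s => FS s * (1 - Sst / S s) + FE s * (1 - Est / E s) + kap * (FI s * (1 - Ist / I s))).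
  assert (Hpos : forall t, T <= t -> 0 < S t /\ 0 < E t /\ 0 < I t).
  { intros t Ht. destruct (Hdel t Ht) as [A [B C]]. lra. }
  assert (HdV : forall t, T <= t -> is_derive V t (dV t)).
  { intros t Ht. destruct (Hsys t ltac:(lra)) as [DS [DE DI]]. destruct (Hpos t Ht) as [P1 [P2 P3]].
    unfold V, dV. auto_derive.
    - repeat split; try (eexists; eassumption); lra.
    - rd DS. rd DE. rd DI. unfold FS, FE, FI. field. repeat split; lra. }
  assert (HdVle : forall t, T <= t -> dV t <= - (dd / N) * ((S t - Sst) * (S t - Sst))).
  { intros t Ht. destruct (Hpos t Ht) as [P1 [P2 P3]]. destruct (Hb t ltac:(lra)) as [B1 [B2 [B3 B4]]].
    unfold dV, FS, FE, FI. rewrite E1, E2, E3, Hkap.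
    pose proof (lyap_ineq k Sst Est Ist sigma dd (S t) (E t) (I t) N hk hSst hEst HIe hsigma hdd P1 P2 P3 ltac:(lra)).
    lra. }
  destruct (mono_conv (fun s => - V s) T (- (Sst - Sst * ln Sst + (Est - Est * ln Est) + kap * (Ist - Ist * ln Ist)))) as [l Hl].
  { apply (mono_of_deriv (fun s => - V s) (fun s => - dV s) T).
    - intros t Ht. apply (is_derive_opp V t (dV t)). auto.
    - intros t Ht. pose proof (HdVle t Ht). assert (0 <= dd / N * ((S t - Sst) * (S t - Sst))) by (apply Rmult_le_pos; [apply Rlt_le, Rdiv_lt_0_compat; lra|apply Rle_0_sqr]). lra. }
  { intros t Ht. destruct (Hpos t Ht) as [P1 [P2 P3]].
    pose proof (xlnx (S t) Sst P1 hSst). pose proof (xlnx (E t) Est P2 hEst). pose proof (xlnx (I t) Ist P3 HIe).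
    unfold V. assert (kap * (Ist - Ist * ln Ist) <= kap * (I t - Ist * ln (I t))) by (apply Rmult_le_compat_l; lra). lra. }
  assert (HB : forall t, 0 <= t -> Rabs (S t) <= N /\ Rabs (E t) <= N /\ Rabs (I t) <= N).
  { intros t Ht. destruct (Hb t Ht) as [B1 [B2 [B3 B4]]]. rewrite !Rabs_pos_eq by lra. lra. }
  assert (HcS : conv S Sst).
  { set (q := fun s => dd / N * ((S s - Sst) * (S s - Sst))).
    set (dq := fun s => dd / N * (2 * (S s - Sst) * FS s)).
    assert (Hq : forall t, T <= t -> is_derive q t (dq t)).
    { intros t Ht. destruct (Hsys t ltac:(lra)) as [DS _]. unfold q, dq. auto_derive.
      - repeat split; eexists; eassumption.
      - rd DS. unfold FS. ring. }
    assert (HqB : exists B, forall t, T <= t -> Rabs (dq t) <= B).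
    { eexists. intros t Ht. destruct (HB t ltac:(lra)) as [B1 [B2 B3]]. unfold dq, FS, fS. bnd. }
    destruct HqB as [B HqB].
    assert (HL2 := lip_of_deriv q dq T B Hq HqB).
    intros eps Heps.
    assert (He2 : 0 < dd / N * (eps * eps)) by (apply Rmult_lt_0_compat; [apply Rdiv_lt_0_compat|]; nra).
    destruct (core (fun s => - V s) (fun s => - dV s) q T B l) with (eps := dd / N * (eps * eps)) as [T1 H1]; try assumption.
    - intros t Ht. apply (is_derive_opp V t (dV t)). auto.
    - intros t Ht. pose proof (HdVle t Ht). unfold q. lra.
    - exists T1. intros t Ht. specialize (H1 t Ht). unfold q in H1.
      assert (Hsq : (S t - Sst) * (S t - Sst) < eps * eps).
      { apply (Rmult_lt_reg_l (dd / N)); [apply Rdiv_lt_0_compat; lra| exact H1]. }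
      apply Rabs_def1; nra. }
  set (dFS := fun s => - (beta * (1 - rho) / N) * (FS s * I s + S s * FI s) - p / N * FS s - mu * FS s).
  assert (HdFS : forall t, T <= t -> is_derive FS t (dFS t)).
  { intros t Ht. destruct (Hsys t ltac:(lra)) as [DS [DE DI]]. unfold dFS, FS, FI. unfold fS at 1. auto_derive.
    - repeat split; eexists; eassumption.
    - rd DS. rd DI. ring. }
  assert (HFSB : exists B, forall t, T <= t -> Rabs (dFS t) <= B).
  { eexists. intros t Ht. destruct (HB t ltac:(lra)) as [B1 [B2 B3]]. unfold dFS, FS, FI, fS, fI. bnd. }
  destruct HFSB as [BS HBS].
  assert (HcFS : conv FS 0).
  { apply (core2 S FS dFS T BS Sst); auto. intros t Ht. exact (proj1 (Hsys t ltac:(lra))). }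
  assert (HidI : forall t, a * S t * (I t - Ist) = - FS t + (a * Ist + dd) * (Sst - S t)).
  { intros t. unfold FS. rewrite E1. rewrite <- Ha. unfold k. ring. }
  assert (HcI : conv I Ist).
  { intros eps Heps.
    assert (hc1 : 0 < a * d * eps / 2) by (assert (0 < a * d) by (apply Rmult_lt_0_compat; lra); nra).
    assert (hA : 0 < a * Ist + dd) by (assert (0 < a * Ist) by (apply Rmult_lt_0_compat; lra); lra).
    assert (hc2 : 0 < a * d * eps / 2 / (a * Ist + dd)) by (apply Rdiv_lt_0_compat; lra).
    destruct (HcFS _ hc1) as [T3 H3]. destruct (HcS _ hc2) as [T4 H4].
    exists (Rmax T (Rmax T3 T4)). intros t Ht.
    assert (HtT : T <= t) by (eapply Rle_trans; [apply Rmax_l|exact Ht]).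
    assert (HtT3 : T3 <= t) by (eapply Rle_trans; [eapply Rle_trans; [apply Rmax_l|apply Rmax_r]|exact Ht]).
    assert (HtT4 : T4 <= t) by (eapply Rle_trans; [eapply Rle_trans; [apply Rmax_r|apply Rmax_r]|exact Ht]).
    specialize (H3 t HtT3). specialize (H4 t HtT4). rewrite Rminus_0_r in H3.
    destruct (Hdel t HtT) as [D1 _].
    pose proof (HidI t) as Hid.
    assert (Hm : (a * Ist + dd) * Rabs (S t - Sst) < a * d * eps / 2).
    { apply (Rmult_lt_compat_l (a * Ist + dd)) in H4; [|lra].
      replace ((a * Ist + dd) * (a * d * eps / 2 / (a * Ist + dd))) with (a * d * eps / 2) in H4 by (field; lra). exact H4. }
    assert (Hr : Rabs (a * S t * (I t - Ist)) < a * d * eps).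
    { rewrite Hid. eapply Rle_lt_trans; [apply Rabs_triang|]. rewrite Rabs_Ropp, Rabs_mult.
      rewrite (Rabs_pos_eq (a * Ist + dd)) by lra. rewrite (Rabs_minus_sym Sst (S t)). lra. }
    rewrite Rabs_mult, (Rabs_pos_eq (a * S t)) in Hr by (apply Rmult_le_pos; lra).
    assert (Hd2 : a * d * Rabs (I t - Ist) <= a * S t * Rabs (I t - Ist)).
    { apply Rmult_le_compat_r; [apply Rabs_pos|]. apply Rmult_le_compat_l; lra. }
    assert (Had : 0 < a * d) by (apply Rmult_lt_0_compat; lra).
    apply (Rmult_lt_reg_l (a * d)); [exact Had|]. lra. }
  set (dFI := fun s => sigma * FE s - (gamma + mu) * FI s).
  assert (HdFI : forall t, T <= t -> is_derive FI t (dFI t)).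
  { intros t Ht. destruct (Hsys t ltac:(lra)) as [DS [DE DI]]. unfold dFI, FI, FE. unfold fI at 1. auto_derive.
    - repeat split; eexists; eassumption.
    - rd DE. rd DI. ring. }
  assert (HFIB : exists B, forall t, T <= t -> Rabs (dFI t) <= B).
  { eexists. intros t Ht. destruct (HB t ltac:(lra)) as [B1 [B2 B3]]. unfold dFI, FE, FI, fE, fI. bnd. }
  destruct HFIB as [BI HBI].
  assert (HcFI : conv FI 0).
  { apply (core2 I FI dFI T BI Ist); auto. intros t Ht. exact (proj2 (proj2 (Hsys t ltac:(lra)))). }
  assert (HidE : forall t, sigma * (E t - Est) = FI t + (gamma + mu) * (I t - Ist)).
  { intros t. unfold FI. rewrite E3, Hcc. field. lra. }
  assert (HcE : conv E Est).
  { intros eps Heps.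
    assert (hc1 : 0 < sigma * eps / 2) by nra.
    assert (hc2 : 0 < sigma * eps / 2 / (gamma + mu)) by (apply Rdiv_lt_0_compat; lra).
    destruct (HcFI _ hc1) as [T3 H3]. destruct (HcI _ hc2) as [T4 H4].
    exists (Rmax T3 T4). intros t Ht.
    specialize (H3 t (Rle_trans _ _ _ (Rmax_l _ _) Ht)). specialize (H4 t (Rle_trans _ _ _ (Rmax_r _ _) Ht)).
    rewrite Rminus_0_r in H3.
    assert (Hm : (gamma + mu) * Rabs (I t - Ist) < sigma * eps / 2).
    { apply (Rmult_lt_compat_l (gamma + mu)) in H4; [|lra].
      replace ((gamma + mu) * (sigma * eps / 2 / (gamma + mu))) with (sigma * eps / 2) in H4 by (field; lra). exact H4. }
    assert (Hr : Rabs (sigma * (E t - Est)) < sigma * eps).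
    { rewrite HidE. eapply Rle_lt_trans; [apply Rabs_triang|]. rewrite Rabs_mult.
      rewrite (Rabs_pos_eq (gamma + mu)) by lra. lra. }
    rewrite Rabs_mult, (Rabs_pos_eq sigma) in Hr by lra.
    apply (Rmult_lt_reg_l sigma); lra. }
  split; [exact HcS| split; [exact HcE| exact HcI]].
Qed.

Lemma conv_seq (f : R -> R) l (tn : nat -> R) : conv f l -> is_lim_seq tn p_infty ->
  is_lim_seq (fun n => f (tn n)) l.
Proof.
  intros Hc Ht. apply is_lim_seq_spec. intros eps.
  destruct (Hc eps (cond_pos eps)) as [T HT].
  apply is_lim_seq_spec in Ht. specialize (Ht T).
  destruct Ht as [n0 Hn0]. exists n0. intros n Hn. apply HT. apply Rlt_le. apply Hn0. exact Hn.
Qed.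

Lemma lim_eq (u : nat -> R) (a b : R) : is_lim_seq u a -> is_lim_seq u b -> a = b.
Proof.
  intros Ha Hb. pose proof (is_lim_seq_unique u a Ha) as A. pose proof (is_lim_seq_unique u b Hb) as B.
  rewrite A in B. apply Rbar_finite_eq in B. exact B.
Qed.

Theorem mainTheorem11 (N mu beta sigma gamma p rho : R)
  (hN : 0 < N) (hmu : 0 < mu) (hbeta : 0 < beta) (hsigma : 0 < sigma)
  (hgamma : 0 < gamma) (hp : 0 < p) (hrho0 : 0 < rho) (hrho1 : rho < 1)
  (x : R -> R * R * R)
  (hx0 : inOmega N (x 0))
  (hsol : forall t, 0 <= t -> solves_at N mu beta sigma gamma rho p x t)
  (hint : forall y, omega_limit x y -> inIntOmega N y) :
  closed_orbit N mu beta sigma gamma rho p (omega_limit x) \/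
  (forall y, omega_limit x y <->
     y = (Se N mu beta sigma gamma rho, Ee N mu beta sigma gamma rho p,
          Ie N mu beta sigma gamma rho p)).
Proof.
  right.
  set (S := fun s => fst (fst (x s))). set (E := fun s => snd (fst (x s))). set (I := fun s => snd (x s)).
  assert (Hprm : prm N mu beta sigma gamma p rho) by (repeat split; assumption).
  assert (Hsys : sys N mu beta sigma gamma p rho S E I).
  { intros t Ht. destruct (hsol t Ht) as [A [B C]]. split; [exact A| split; [exact B| exact C]]. }
  assert (H0 : 0 <= S 0 /\ 0 <= E 0 /\ 0 <= I 0 /\ S 0 + E 0 + I 0 <= N).
  { unfold inOmega in hx0. unfold S, E, I. destruct (x 0) as [[s0 e0] i0]. simpl. exact hx0. }
  destruct H0 as [H0S [H0E [H0I H0N]]].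
  pose proof (positivity N mu beta sigma gamma p rho S E I Hprm Hsys H0S H0E H0I) as Hpos.
  pose proof (upper N mu beta sigma gamma p rho S E I Hprm Hsys H0N Hpos) as Hup.
  assert (Hb : forall t, 0 <= t -> 0 <= S t /\ 0 <= E t /\ 0 <= I t /\ S t + E t + I t <= N).
  { intros t Ht. destruct (Hpos t Ht) as [A [B C]]. pose proof (Hup t Ht). repeat split; assumption. }
  destruct (eventually_delta N x) as [d [T [Hd [HT Hdel]]]].
  { intros t Ht. destruct (Hb t Ht) as [A [B [C D]]]. fold (S t) (E t) (I t). repeat split; lra. }
  { exact hint. }
  fold S E I in Hdel.
  destruct (Rle_or_lt (Ie N mu beta sigma gamma rho p) 0) as [HIe|HIe].
  { exfalso. exact (R0_le_1_absurd N mu beta sigma gamma p rho S E I d T Hprm Hsys Hb Hd HT Hdel HIe). }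
  destruct (conv_main N mu beta sigma gamma p rho S E I d T Hprm Hsys Hb Hd HT Hdel HIe) as [CS [CE CI]].
  intros y. split.
  - intros [tn [Htn [H1 [H2 H3]]]].
    pose proof (conv_seq S _ tn CS Htn) as L1.
    pose proof (conv_seq E _ tn CE Htn) as L2.
    pose proof (conv_seq I _ tn CI Htn) as L3.
    destruct y as [[y1 y2] y3]. simpl in H1, H2, H3.
    rewrite (lim_eq _ _ _ H1 L1), (lim_eq _ _ _ H2 L2), (lim_eq _ _ _ H3 L3). reflexivity.
  - intros ->. exists INR. split; [exact is_lim_seq_INR|].
    split; [exact (conv_seq S _ INR CS is_lim_seq_INR)|].
    split; [exact (conv_seq E _ INR CE is_lim_seq_INR)| exact (conv_seq I _ INR CI is_lim_seq_INR)].
Qed.
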